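(* Any naturally ordered compact Hausdorff topological semiring $R$ is bounded, i.e., the partially ordered set $(R,\le)$ has a greatest element.
   Context: A semiring is an algebra $(R,+,\cdot,0)$ such that $(R,+,0)$ is a commutative monoid, $(R,\cdot)$ is a semigroup (no multiplicative identity is required), multiplication distributes over addition on both sides, and $0\cdot x = x\cdot 0 = 0$ for all $x\in R$. A topological semiring is a semiring with a topology in which addition and multiplication are continuous. On $R$ define $x\le y$ iff there is $z\in R$ with $x+z=y$; $R$ is naturally ordered if this preorder is antisymmetric. *)

(* Defs.v *)
From HB Require Import structures.
From mathcomp Require Import all_boot all_order.
From mathcomp Require Import all_classical topology.
Set Implicit Arguments. Unset Strict Implicit. Unset Printing Implicit Defensive.

(* Semiring in the sense of the paper: (R,+,0) commutative monoid,
   (R,.) semigroup (no unit required), two-sided distributivity, 0 absorbing. *)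
Definition is_semiring (R : Type) (add mul : R -> R -> R) (zero : R) : Prop :=
  (forall x y z, add x (add y z) = add (add x y) z) /\
  (forall x y, add x y = add y x) /\
  (forall x, add zero x = x) /\
  (forall x y z, mul x (mul y z) = mul (mul x y) z) /\
  (forall x y z, mul x (add y z) = add (mul x y) (mul x z)) /\
  (forall x y z, mul (add x y) z = add (mul x z) (mul y z)) /\
  (forall x, mul zero x = zero /\ mul x zero = zero).

Definition is_topological_semiring (R : topologicalType)
    (add mul : R -> R -> R) (zero : R) : Prop :=
  [/\ is_semiring add mul zero,
      continuous (fun p : R * R => add p.1 p.2) &
      continuous (fun p : R * R => mul p.1 p.2)].

Definition sr_le (R : Type) (add : R -> R -> R) (x y : R) : Prop :=
  exists z, add x z = y.

Definition naturally_ordered (R : Type) (add : R -> R -> R) : Prop :=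
  forall x y, sr_le add x y -> sr_le add y x -> x = y.

(* Main.v *)
Require Import Defs.
From HB Require Import structures.
From mathcomp Require Import all_boot all_order.
From mathcomp Require Import all_classical topology.

Local Open Scope classical_set_scope.

Theorem corollary3p5 (R : topologicalType) (add mul : R -> R -> R) (zero : R) :
  is_topological_semiring add mul zero ->
  naturally_ordered add ->
  compact [set: R]%classic ->
  hausdorff_space R ->
  exists top : R, forall x : R, sr_le add x top.
Proof.
move=> [[addA [addC [add0 _]]] cadd _] _ Rc Rh.
pose U := fun x : R => add x @` [set: R].
have Ucl : forall x, closed (U x).
  move=> x; apply: compact_closed => //; apply: continuous_compact => //.
  apply: continuous_subspaceT => y.
  have -> : add x = (fun p : R * R => add p.1 p.2) \o (fun y => (x, y)) by [].
  apply: continuous_comp; last exact: cadd.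
  by apply: cvg_pair; [exact: cvg_cst|exact: cvg_id].
pose F := filter_from [set: R] U.
have FF : ProperFilter F.
  apply: filter_from_proper; last by move=> i _; exists (add i zero); exists zero.
  apply: filter_fromT_filter; first by exists zero.
  move=> i j; exists (add i j) => _ [z _ <-]; split.
    by exists (add j z) => //; rewrite addA.
  by exists (add i z) => //; rewrite addA (addC j i).
have [p [_ clp]] := Rc F FF (filterT).
exists p => x.
have : U x p.
  apply: (Ucl x); rewrite /closure /= => B Bp.
  apply: (clp (U x) B) => //.
  by exists x; [|move=> w].
by case=> z _ <-; exists z.
Qed.
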